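(* Let $V$ be a family of representations of $\mathcal G_K$ over $S$, $r\ge r_0$, and write $\mathbf D^r=\mathbf D^r_L$, $\mathbf D^{pr}=\mathbf D^{pr}_L$. Let $M_0=(\mathbf D^r)^{\varphi=1}=\{z\in\mathbf D^r:\varphi(z)=z\}$ and $N=\mathbf D^{pr}/(\varphi-1)\mathbf D^r$ (both $G_\infty$-modules). For a $G_\infty$-module $M$ let $f_M(m)=((\gamma-1)m,(\tau-1)m)$ and $g_M(a,b)=(\tau-1)a+(1-\delta^{-1}\gamma)b$. Let $d_0,d_1,d_2$ be the maps $d_0(a)=((\varphi-1)a,(\gamma-1)a,(\tau-1)a)$ on $\mathbf D^r$, $d_1(a,b,c)=((\gamma-1)a+(1-\varphi)b,(\tau-1)a+(1-\varphi)c,(\tau-1)b+(1-\delta^{-1}\gamma)c)$ on $\mathbf D^{pr}\oplus\mathbf D^r\oplus\mathbf D^r$, and $d_2(a,b,c)=(\tau-1)a+(1-\delta^{-1}\gamma)b+(\varphi-1)c$ on $\mathbf D^{pr}\oplus\mathbf D^{pr}\oplus\mathbf D^r$. Then the sequence $$0\to\frac{\ker g_{M_0}}{\mathrm{im}\,f_{M_0}}\xrightarrow{\delta_1}\frac{\ker d_1}{\mathrm{im}\,d_0}\xrightarrow{\delta_2}N^{\tau=1,\gamma=1}\xrightarrow{\delta_3}\frac{M_0}{(\tau-1)M_0+(1-\delta^{-1}\gamma)M_0}\xrightarrow{\delta_4}\frac{\ker d_2}{\mathrm{im}\,d_1}\xrightarrow{\delta_5}\frac{\ker g_N}{\mathrm{im}\,f_N}\to0$$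 is well defined and exact, where $\delta_1(y,z)=(0,y,z)$, $\delta_2(x,y,z)=x$, $\delta_3(x)=(\tau-1)y_x+(1-\delta^{-1}\gamma)z_x$ for any $y_x,z_x\in\mathbf D^r$ with $(\gamma-1)x=(\varphi-1)y_x$ and $(\tau-1)x=(\varphi-1)z_x$, $\delta_4(z)=(0,0,z)$, and $\delta_5(x,y,z)=(x,y)$ (all on classes).
   Context: Let $p$ be an odd prime, $K/\mathbf Q_p$ finite with uniformizer $\pi$ and residue field $k$; $\overline K$, $\mathbf C_p$, $\mathcal O_{\mathbf C_p}$, tilt $\mathbf C_p^\flat$ with $v^\flat(x)=v_p(x^\sharp)$. Fix $\pi_0=\pi$, $\pi_{n+1}^p=\pi_n$ and compatible primitive $p^n$-th roots of unity $\epsilon_n$; $K_\infty=\bigcup K(\pi_n)$, $K_{\mathrm{cycl}}=\bigcup K(\epsilon_n)$, $L=K_\infty K_{\mathrm{cycl}}$, $\mathcal G_K=\mathrm{Gal}(\overline K/K)$, $H_\infty=\mathrm{Gal}(\overline K/L)$, $G_\infty=\mathrm{Gal}(L/K)$, $H_{\tau,K}=\mathrm{Gal}(\overline K/K_\infty)$, $\chi$ cyclotomic character, $c(g)\in\mathbf Z_p$ given by $g(\pi_n)=\epsilon_n^{c(g)}\pi_n$. $\gamma$ is a topological generator of $\mathrm{Gal}(L/K_\infty)$, $\tau\in\mathrm{Gal}(L/K_{\mathrm{cycl}})$ with $c(\tau)=1$; $g\tau g^{-1}=\tau^{\chi(g)}$ for $g\in\mathrm{Gal}(L/K_\infty)$.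 $\delta=\frac{\tau^{\chi(\gamma)}-1}{\tau-1}$ is the limit of $1+\tau+\dots+\tau^{\chi_n-1}$, $\chi_n\in\mathbf Z_{>0}$, $\chi_n\to\chi(\gamma)$; it is invertible. Rings: $\tilde{\mathbf A}=W(\mathbf C_p^\flat)$, $\tilde{\mathbf B}=\tilde{\mathbf A}[1/p]$ with Frobenius $\varphi$, $\mathcal G_K$-action; $\tilde{\mathbf B}^{\dagger,r}=\{\sum_{n\gg-\infty}p^n[x_n]: v^\flat(x_n)+\frac{pr}{p-1}n\to\infty\}$; $\mathbf A_{\tau,K}$ the $p$-adic completion of $W(k)[[u]][1/u]$ embedded via $u\mapsto[(\pi_n)_n]$, $\mathbf B_{\tau,K}=\mathbf A_{\tau,K}[1/p]$, $\mathbf B^{\dagger,r}_{\tau,K}=\mathbf B_{\tau,K}\cap\tilde{\mathbf B}^{\dagger,r}$, $\tilde{\mathbf B}^{\dagger,r}_L=(\tilde{\mathbf B}^{\dagger,r})^{H_\infty}$. $S$ is a $\mathbf Q_p$-Banach algebra whose residue fields at maximal ideals are finite over $\mathbf Q_p$; $\hat\otimes$ is over $\mathbf Q_p$. A family of representations is a free $S$-module $V$ of finite rank with continuous $S$-linear $\mathcal G_K$-action. There exist $r_0>0$ and, for $r\ge r_0$, compatible locally free $S\hat\otimes\mathbf B^{\dagger,r}_{\tau,K}$-modules $D^{\dagger,r}_{\tau,K}(V)$ inside $((S\hat\otimes\tilde{\mathbf B}^{\dagger,r})\otimes_SV)^{H_{\tau,K}}$, with $\varphi\otimes 1$ mapping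 level $r$ into level $pr$, and $(S\hat\otimes\tilde{\mathbf B}^{\dagger,r})\otimes D^{\dagger,r}_{\tau,K}(V)\cong(S\hat\otimes\tilde{\mathbf B}^{\dagger,r})\otimes_SV$. $\mathbf D^r_L=(S\hat\otimes\tilde{\mathbf B}^{\dagger,r}_L)\otimes_{S\hat\otimes\mathbf B^{\dagger,r}_{\tau,K}}D^{\dagger,r}_{\tau,K}(V)$ is, via this isomorphism, an $H_\infty$-fixed $\mathcal G_K$-stable submodule of $(S\hat\otimes\tilde{\mathbf B}^{\dagger,r})\otimes_SV$, hence a $G_\infty$-module, and $\varphi=\varphi\otimes1:\mathbf D^r_L\to\mathbf D^{pr}_L$ commutes with $G_\infty$. *)

(* Defs.v *)
From HB Require Import structures.
From mathcomp Require Import all_boot all_order all_algebra.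
Set Implicit Arguments. Unset Strict Implicit. Unset Printing Implicit Defensive.
Import GRing.Theory.
Local Open Scope ring_scope.

(* A subquotient Z/B of an abelian group U is given by the predicate Z of    *)
(* representatives (e.g. a kernel) and the predicate B of the subgroup that  *)
(* is divided out (e.g. an image).                                           *)
Record subquot (U : zmodType) := SubQuot { sq_Z : U -> Prop; sq_B : U -> Prop }.

(* A map between subquotients "on classes" is given by a relation R between  *)
(* representatives: R u v means "v represents the image of the class of u".  *)
(* [sq_map_wd A B R] says that R induces a well-defined group homomorphism   *)
(* A -> B: every class has an image, images are representatives of B, the    *)
(* image class depends only on the class (and not on any auxiliary choice), *)
(* and the induced map is additive.                                          *)
Definition sq_map_wd (U V : zmodType) (A : subquot U) (B : subquot V)
    (R : U -> V -> Prop) : Prop :=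
  [/\ forall u, sq_Z A u -> exists v, R u v,
      forall u v, sq_Z A u -> R u v -> sq_Z B v,
      forall u1 u2 v1 v2, sq_Z A u1 -> sq_Z A u2 -> R u1 v1 -> R u2 v2 ->
        sq_B A (u1 - u2) -> sq_B B (v1 - v2)
    & forall u1 u2 v1 v2 w, sq_Z A u1 -> sq_Z A u2 -> R u1 v1 -> R u2 v2 ->
        R (u1 + u2) w -> sq_B B (w - (v1 + v2))].

Definition sq_inj (U V : zmodType) (A : subquot U) (B : subquot V)
    (R : U -> V -> Prop) : Prop :=
  forall u v, sq_Z A u -> R u v -> sq_B B v -> sq_B A u.

Definition sq_surj (U V : zmodType) (A : subquot U) (B : subquot V)
    (R : U -> V -> Prop) : Prop :=
  forall v, sq_Z B v -> exists u v', [/\ sq_Z A u, R u v' & sq_B B (v - v')].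

Definition sq_exact (U V W : zmodType) (A : subquot U) (B : subquot V)
    (C : subquot W) (R1 : U -> V -> Prop) (R2 : V -> W -> Prop) : Prop :=
  forall v, sq_Z B v ->
    ((exists w, R2 v w /\ sq_B C w) <->
     (exists u v', [/\ sq_Z A u, R1 u v' & sq_B B (v - v')])).

Definition graph (U V : Type) (f : U -> V) : U -> V -> Prop :=
  fun u v => v = f u.

Record phiGammaData (S : pzRingType) := PhiGammaData {
  Dr : lmodType S;
  Dpr : lmodType S;
  incl : {linear Dr -> Dpr};
  phi : {linear Dr -> Dpr};
  gam_r : {linear Dr -> Dr};
  tau_r : {linear Dr -> Dr};
  del_r : {linear Dr -> Dr};
  deli_r : {linear Dr -> Dr};
  gam_p : {linear Dpr -> Dpr};
  tau_p : {linear Dpr -> Dpr};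
  del_p : {linear Dpr -> Dpr};
  deli_p : {linear Dpr -> Dpr}
}.

Section Complexes.
Variables (S : pzRingType) (D : phiGammaData S).
Local Notation Dr := (Dr D).
Local Notation Dpr := (Dpr D).

Definition phim1 (a : Dr) : Dpr := phi D a - incl D a.
Definition Delta_r (a : Dr) : Dr := deli_r D (gam_r D a).
Definition Delta_p (a : Dpr) : Dpr := deli_p D (gam_p D a).

Definition M0 (z : Dr) : Prop := phi D z = incl D z.
(* membership in (phi - 1) D^r, the subgroup defining N = D^{pr}/(phi-1)D^r *)
Definition in_imphi (x : Dpr) : Prop := exists y : Dr, x = phim1 y.

Definition d0 (a : Dr) : Dpr * Dr * Dr :=
  (phim1 a, gam_r D a - a, tau_r D a - a).
Definition d1 (x : Dpr * Dr * Dr) : Dpr * Dpr * Dr :=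
  let: (a, b, c) := x in
  ((gam_p D a - a) - phim1 b,
   (tau_p D a - a) - phim1 c,
   (tau_r D b - b) + (c - Delta_r c)).
Definition d2 (x : Dpr * Dpr * Dr) : Dpr :=
  let: (a, b, c) := x in
  (tau_p D a - a) + (b - Delta_p b) + phim1 c.

Definition H1M0 : subquot ((Dr * Dr)%type) :=
  SubQuot (fun p : (Dr * Dr)%type => [/\ M0 p.1, M0 p.2 &
                      (tau_r D p.1 - p.1) + (p.2 - Delta_r p.2) = 0])
          (fun p => exists m, M0 m /\ p = (gam_r D m - m, tau_r D m - m)).

Definition H1tot : subquot ((Dpr * Dr * Dr)%type) :=
  SubQuot (fun x => d1 x = 0) (fun x => exists a, x = d0 a).

(* N^{tau = 1, gamma = 1}, represented in D^{pr} modulo (phi-1) D^r *)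
Definition H0N : subquot Dpr :=
  SubQuot (fun x => in_imphi (tau_p D x - x) /\ in_imphi (gam_p D x - x))
          in_imphi.

Definition H2M0 : subquot Dr :=
  SubQuot M0 (fun z => exists a b, [/\ M0 a, M0 b &
                         z = (tau_r D a - a) + (b - Delta_r b)]).

Definition H2tot : subquot ((Dpr * Dpr * Dr)%type) :=
  SubQuot (fun x => d2 x = 0) (fun x => exists y, x = d1 y).

(* ker g_N / im f_N, represented in D^{pr} x D^{pr} (N = D^{pr}/(phi-1)D^r) *)
Definition H1N : subquot ((Dpr * Dpr)%type) :=
  SubQuot (fun p : (Dpr * Dpr)%type =>
             in_imphi ((tau_p D p.1 - p.1) + (p.2 - Delta_p p.2)))
          (fun p => exists m, in_imphi (p.1 - (gam_p D m - m)) /\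
                              in_imphi (p.2 - (tau_p D m - m))).

Definition delta1 : Dr * Dr -> Dpr * Dr * Dr -> Prop :=
  graph (fun p : (Dr * Dr)%type => (0, p.1, p.2)).
Definition delta2 : Dpr * Dr * Dr -> Dpr -> Prop :=
  graph (fun x : (Dpr * Dr * Dr)%type => x.1.1).
Definition delta3 (x : Dpr) (w : Dr) : Prop :=
  exists y_x z_x : Dr, [/\ gam_p D x - x = phim1 y_x,
                           tau_p D x - x = phim1 z_x &
                           w = (tau_r D y_x - y_x) + (z_x - Delta_r z_x)].
Definition delta4 : Dr -> Dpr * Dpr * Dr -> Prop :=
  graph (fun z : Dr => (0, 0, z)).
Definition delta5 : Dpr * Dpr * Dr -> Dpr * Dpr -> Prop :=
  graph (fun x : (Dpr * Dpr * Dr)%type => (x.1.1, x.1.2)).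

End Complexes.

Arguments delta1 {S} D _ _.
Arguments delta2 {S} D _ _.
Arguments delta3 {S} D _ _.
Arguments delta4 {S} D _ _.
Arguments delta5 {S} D _ _.

(* Main.v *)
Require Import Defs.
From HB Require Import structures.
From mathcomp Require Import all_boot all_order all_algebra.
Import GRing.Theory.
Local Open Scope ring_scope.

Lemma sub4 {V : zmodType} (a b c d : V) : (a - b) - (c - d) = (a - c) - (b - d).
Proof. by rewrite !opprB addrACA [in RHS]addrACA [- b + _]addrC. Qed.
Lemma addsub {V : zmodType} (a b c d : V) : (a - b) + (c - d) = (a + c) - (b + d).
Proof. by rewrite opprD addrACA. Qed.
Lemma zero6 {V : zmodType} (p q r s : V) : (p - q - (r - s)) + (q - s - (p - r)) = 0.
Proof. by rewrite sub4 addrC subrKA subrr. Qed.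
Lemma re4 {V : zmodType} (P Q R S P' Q' R' S' : V) :
  (P - P' - (Q - Q')) + ((R - R') - (S - S')) = (P - Q + (R - S)) - ((P' - Q') + (R' - S')).
Proof. by rewrite (sub4 P) (sub4 R) addsub. Qed.
Lemma re4p {V : zmodType} (P Q R S P' Q' R' S' : V) :
  (P + P' - (Q + Q')) + ((R + R') - (S + S')) = (P - Q + (R - S)) + ((P' - Q') + (R' - S')).
Proof. by rewrite -!addsub addrACA. Qed.
Lemma negre {V : zmodType} (p q r s : V) : -(p - q + (r - s)) = (-p - -q) + (-r - -s).
Proof. by rewrite opprD !opprB !opprK !(addrC (- _)). Qed.
Lemma subDr' {V : zmodType} (c t : V) : c - (c + t) = - t.
Proof. by rewrite opprD addrA subrr add0r. Qed.
Lemma subBl' {V : zmodType} (p q : V) : p - q - p = - q.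
Proof. by rewrite addrC addKr. Qed.
Lemma sub3 (A B C : zmodType) (a a' : A) (b b' : B) (c c' : C) :
  (a,b,c) - (a',b',c') = (a-a', b-b', c-c'). Proof. by []. Qed.
Lemma add3 (A B C : zmodType) (a a' : A) (b b' : B) (c c' : C) :
  (a,b,c) + (a',b',c') = (a+a', b+b', c+c'). Proof. by []. Qed.
Lemma sub2 (A B : zmodType) (a a' : A) (b b' : B) :
  (a,b) - (a',b') = (a-a', b-b'). Proof. by []. Qed.
Lemma add2 (A B : zmodType) (a a' : A) (b b' : B) :
  (a,b) + (a',b') = (a+a', b+b'). Proof. by []. Qed.
Lemma pair3_eq0 (A B C : zmodType) (a : A) (b : B) (c : C) :
  (a,b,c) = 0 -> [/\ a = 0, b = 0 & c = 0].
Proof. by case. Qed.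
Lemma eq30 (A B C : zmodType) (a : A) (b : B) (c : C) :
  a = 0 -> b = 0 -> c = 0 -> (a,b,c) = 0.
Proof. by move=> -> -> ->. Qed.

Theorem proposition4p1 (S : pzRingType) (D : phiGammaData S)
  (* D^r ⊆ D^{pr} *)
  (incl_inj : injective (incl D))
  (* the G_infinity-action (gamma, tau, delta) is compatible with D^r ⊆ D^{pr} *)
  (gam_iota : forall x, gam_p D (incl D x) = incl D (gam_r D x))
  (tau_iota : forall x, tau_p D (incl D x) = incl D (tau_r D x))
  (del_iota : forall x, del_p D (incl D x) = incl D (del_r D x))
  (* phi commutes with G_infinity *)
  (gam_phi : forall x, gam_p D (phi D x) = phi D (gam_r D x))
  (tau_phi : forall x, tau_p D (phi D x) = phi D (tau_r D x))
  (del_phi : forall x, del_p D (phi D x) = phi D (del_r D x))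
  (* delta is invertible, with inverse deli *)
  (del_r_K : cancel (del_r D) (deli_r D)) (deli_r_K : cancel (deli_r D) (del_r D))
  (del_p_K : cancel (del_p D) (deli_p D)) (deli_p_K : cancel (deli_p D) (del_p D))
  (* delta is a limit of polynomials in tau, so it commutes with tau *)
  (del_tau_r : forall x, del_r D (tau_r D x) = tau_r D (del_r D x))
  (del_tau_p : forall x, del_p D (tau_p D x) = tau_p D (del_p D x))
  (* gamma tau gamma^{-1} = tau^{chi(gamma)} and delta (tau - 1) = tau^{chi(gamma)} - 1,
     i.e. gamma (tau - 1) = delta (tau - 1) gamma *)
  (gam_tau_r : forall x, gam_r D (tau_r D x - x)
                         = del_r D (tau_r D (gam_r D x) - gam_r D x))
  (gam_tau_p : forall x, gam_p D (tau_p D x - x)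
                         = del_p D (tau_p D (gam_p D x) - gam_p D x)) :
  (* well-definedness of delta_1, ..., delta_5 *)
  [/\ sq_map_wd (H1M0 D) (H1tot D) (delta1 D),
      sq_map_wd (H1tot D) (H0N D) (delta2 D),
      sq_map_wd (H0N D) (H2M0 D) (delta3 D),
      sq_map_wd (H2M0 D) (H2tot D) (delta4 D)
    & sq_map_wd (H2tot D) (H1N D) (delta5 D)] /\
  (* exactness of 0 -> . -> . -> . -> . -> . -> . -> 0 *)
  [/\ sq_inj (H1M0 D) (H1tot D) (delta1 D),
      sq_exact (H1M0 D) (H1tot D) (H0N D) (delta1 D) (delta2 D),
      sq_exact (H1tot D) (H0N D) (H2M0 D) (delta2 D) (delta3 D),
      sq_exact (H0N D) (H2M0 D) (H2tot D) (delta3 D) (delta4 D)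
    & sq_exact (H2M0 D) (H2tot D) (H1N D) (delta4 D) (delta5 D)] /\
  sq_surj (H2tot D) (H1N D) (delta5 D).
Proof.
have deli_iota : forall x, deli_p D (incl D x) = incl D (deli_r D x).
  by move=> x; apply: (can_inj del_p_K); rewrite deli_p_K del_iota deli_r_K.
have deli_phi : forall x, deli_p D (phi D x) = phi D (deli_r D x).
  by move=> x; apply: (can_inj del_p_K); rewrite deli_p_K del_phi deli_r_K.
have P0 : phim1 (0 : Dr D) = 0 by rewrite /phim1 !raddf0 ?subrr ?addr0.
have PB : forall x y : Dr D, phim1 (x - y) = phim1 x - phim1 y.
  by move=> x y; rewrite /phim1 (linearB (phi D)) (linearB (incl D)) sub4.
have PN : forall x : Dr D, phim1 (- x) = - phim1 x.
  by move=> x; rewrite -sub0r PB P0 sub0r.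
have PD : forall x y : Dr D, phim1 (x + y) = phim1 x + phim1 y.
  by move=> x y; rewrite -{1}[y]opprK PB PN opprK.
have tauP : forall y : Dr D, tau_p D (phim1 y) = phim1 (tau_r D y).
  move=> y; rewrite /phim1 linearB; congr (_ - _); [exact: tau_phi | exact: tau_iota].
have gamP : forall y : Dr D, gam_p D (phim1 y) = phim1 (gam_r D y).
  by move=> y; rewrite /phim1 linearB gam_phi gam_iota.
have DelP : forall y : Dr D, Delta_p (phim1 y) = phim1 (Delta_r y).
  by move=> y; rewrite /Delta_p /Delta_r /phim1 !linearB gam_phi gam_iota deli_phi deli_iota.
have DrB : forall x y : Dr D, Delta_r (x - y) = Delta_r x - Delta_r y.
  by move=> x y; rewrite /Delta_r !linearB.
have DpB : forall x y : Dpr D, Delta_p (x - y) = Delta_p x - Delta_p y.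
  by move=> x y; rewrite /Delta_p !linearB.
have KeyR : forall u : Dr D, Delta_r (tau_r D u - u) = tau_r D (gam_r D u) - gam_r D u.
  by move=> u; rewrite /Delta_r gam_tau_r del_r_K.
have KeyP : forall u : Dpr D, Delta_p (tau_p D u - u) = tau_p D (gam_p D u) - gam_p D u.
  by move=> u; rewrite /Delta_p gam_tau_p del_p_K.
have ZeroR : forall a : Dr D, (tau_r D (gam_r D a - a) - (gam_r D a - a))
     + ((tau_r D a - a) - Delta_r (tau_r D a - a)) = 0.
  by move=> a; rewrite KeyR linearB; exact: zero6.
have ZeroP : forall a : Dpr D, (tau_p D (gam_p D a - a) - (gam_p D a - a))
     + ((tau_p D a - a) - Delta_p (tau_p D a - a)) = 0.
  by move=> a; rewrite KeyP linearB; exact: zero6.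
have M0E : forall z : Dr D, M0 z <-> phim1 z = 0.
  by move=> z; rewrite /M0 /phim1; split=> [->|/eqP]; [rewrite subrr | rewrite subr_eq0 => /eqP].
have DrD : forall x y : Dr D, Delta_r (x + y) = Delta_r x + Delta_r y.
  by move=> x y; rewrite /Delta_r !linearD.
have DrN : forall x : Dr D, Delta_r (- x) = - Delta_r x.
  by move=> x; rewrite /Delta_r !linearN.
have Dr0 : Delta_r (0 : Dr D) = 0 by rewrite /Delta_r !linear0.
have Dp0 : Delta_p (0 : Dpr D) = 0 by rewrite /Delta_p !linear0.
have M00 : M0 (0 : Dr D) by apply/M0E.
have B20 : sq_B (H2M0 D) 0.
  by exists 0, 0; split => //; rewrite linear0 Dr0 !subr0 addr0.
split; [split | split; [split | ]].
- split.
  + by move=> u _; eexists.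
  + move=> [y z] v /= [/M0E My /M0E Mz H] ->.
    by rewrite /d1 /= My Mz H !linear0 ?subr0 ?addr0.
  + move=> [y1 z1] [y2 z2] v1 v2 _ _ -> -> [m [Mm E]].
    have Ey : y1 - y2 = gam_r D m - m := congr1 fst E.
    have Ez : z1 - z2 = tau_r D m - m := congr1 snd E.
    exists m; rewrite /= /d0; congr (_,_,_) => /=;
      [by rewrite subrr (proj1 (M0E m) Mm) | exact: Ey | exact: Ez].
  + move=> [y1 z1] [y2 z2] v1 v2 w _ _ -> -> ->.
    by exists 0; rewrite /d0; congr (_,_,_) => /=; rewrite ?P0 ?linear0 ?addr0 ?subrr.
- split.
  + by move=> u _; eexists.
  + move=> [[x y] z] v /pair3_eq0 [E1 E2 E3] ->.
    by split; [exists z | exists y]; apply: subr0_eq.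
  + move=> [[x1 y1] z1] [[x2 y2] z2] v1 v2 _ _ -> -> [a Ea].
    by exists a; exact: (congr1 (fun t => t.1.1) Ea).
  + move=> [[x1 y1] z1] [[x2 y2] z2] v1 v2 w _ _ -> -> ->.
    by exists 0; rewrite /= P0 subrr.
- have L3 : forall (x : Dpr D) (y z a : Dr D), gam_p D x - x = phim1 y ->
      tau_p D x - x = phim1 z -> x = phim1 a ->
      sq_B (H2M0 D) (tau_r D y - y + (z - Delta_r z)).
    move=> x y z a Ey Ez Ex.
    exists (y - (gam_r D a - a)), (z - (tau_r D a - a)); split.
    * by apply/M0E; rewrite !PB -gamP -Ey -Ex subrr.
    * by apply/M0E; rewrite !PB -tauP -Ez -Ex subrr.
    * by rewrite (linearB (tau_r D)) DrB re4 ZeroR subr0.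
  split.
  + move=> x [[z Ez] [y Ey]].
    by exists (tau_r D y - y + (z - Delta_r z)), y, z.
  + move=> x w _ [y [z [Ey Ez ->]]].
    apply/M0E; rewrite PD !PB -tauP -DelP -Ey -Ez; exact: ZeroP.
  + move=> x1 x2 w1 w2 _ _ [y1 [z1 [Ey1 Ez1 ->]]] [y2 [z2 [Ey2 Ez2 ->]]] [a Ea].
    rewrite -re4 -(linearB (tau_r D)) -DrB.
    apply: (L3 (x1 - x2) _ _ a) => //.
    * by rewrite PB -Ey1 -Ey2 linearB sub4.
    * by rewrite PB -Ez1 -Ez2 linearB sub4.
  + move=> x1 x2 w1 w2 w _ _ [y1 [z1 [Ey1 Ez1 ->]]] [y2 [z2 [Ey2 Ez2 ->]]]
      [y3 [z3 [Ey3 Ez3 ->]]].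
    rewrite -re4p -(linearD (tau_r D)) -DrD -re4 -(linearB (tau_r D)) -DrB.
    apply: (L3 0 _ _ 0).
    * by rewrite linear0 subr0 PB PD -Ey3 -Ey1 -Ey2 linearD addsub subrr.
    * by rewrite linear0 subr0 PB PD -Ez3 -Ez1 -Ez2 linearD addsub subrr.
    * by rewrite P0.
- split.
  + by move=> u _; eexists.
  + move=> z v /M0E Mz ->.
    by rewrite /d2 /= Mz /Delta_p !linear0 ?subr0 ?addr0.
  + move=> z1 z2 v1 v2 _ _ -> -> [a [b [Ma Mb E]]].
    exists (0, a, b).
    by rewrite /d1 /=; congr (_,_,_) => /=;
      rewrite ?(proj1 (M0E a) Ma) ?(proj1 (M0E b) Mb) ?E ?linear0 ?subr0 ?addr0 ?subrr.
  + move=> z1 z2 v1 v2 w _ _ -> -> ->.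
    by exists (0,0,0); rewrite /d1 /=; congr (_,_,_) => /=;
      rewrite ?P0 ?Dr0 ?linear0 ?subr0 ?addr0 ?subrr.
- split.
  + by move=> u _; eexists.
  + move=> [[a b] c] v Hd ->.
    move: Hd; rewrite /d2 /= => Hd.
    by exists (- c); rewrite PN; apply/eqP; rewrite -addr_eq0 Hd.
  + move=> [[a1 b1] c1] [[a2 b2] c2] v1 v2 _ _ -> -> [[[x y] z] E].
    have E1 : a1 - a2 = gam_p D x - x - phim1 y := congr1 (fun t => t.1.1) E.
    have E2 : b1 - b2 = tau_p D x - x - phim1 z := congr1 (fun t => t.1.2) E.
    exists x; rewrite /=; split; [exists (- y) | exists (- z)]; rewrite /=.
    * by rewrite PN E1 subBl'.
    * by rewrite PN E2 subBl'.
  + move=> [[a1 b1] c1] [[a2 b2] c2] v1 v2 w _ _ -> -> ->.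
    by exists 0; rewrite /=; split; exists 0; rewrite /= subrr linear0 !subr0 P0.
- move=> [y z] v [My Mz H] -> [a Ea].
  move: Ea; rewrite /d0 => -[E0 Ey Ez].
  exists a; split; first by apply/M0E; rewrite -E0.
  by rewrite /= Ey Ez.
- move=> [[x y] z] /pair3_eq0 [/subr0_eq E1 /subr0_eq E2 E3]; split.
  + move=> [w [-> [a Ea]]] /=; move: Ea; rewrite /= => Ea.
    exists (y - (gam_r D a - a), z - (tau_r D a - a)),
      (0, y - (gam_r D a - a), z - (tau_r D a - a)); split => //=.
    * split.
      - by apply/M0E; rewrite !PB -gamP -Ea -E1 subrr.
      - by apply/M0E; rewrite !PB -tauP -Ea -E2 subrr.
      - by rewrite (linearB (tau_r D)) DrB re4 E3 ZeroR subrr.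
    * exists a; rewrite /d0; congr (_,_,_) => /=.
      - by rewrite subr0 Ea.
      - by rewrite opprB subrKC.
      - by rewrite opprB subrKC.
  + move=> [[y' z'] [v' [[My Mz H] -> [e Ee]]]].
    have Ex : x - 0 = phim1 e := congr1 (fun t => t.1.1) Ee.
    by exists x; split => //; exists e; rewrite -Ex subr0.
- move=> x [[z Ez] [y Ey]]; split.
  + move=> [w [[y1 [z1 [Ey1 Ez1 ->]]] [a [b [Ma Mb E]]]]].
    exists (x, y1 - a, z1 - b), x; split => //.
    * rewrite /d1 /=; apply: eq30.
      - by rewrite PB (proj1 (M0E a) Ma) subr0 Ey1 subrr.
      - by rewrite PB (proj1 (M0E b) Mb) subr0 Ez1 subrr.
      - by rewrite (linearB (tau_r D)) DrB re4 E subrr.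
    * by exists 0; rewrite subrr P0.
  + move=> [[[x' y'] z'] [v' [/pair3_eq0 [/subr0_eq E1 /subr0_eq E2 E3] -> [e Ee]]]].
    move: Ee; rewrite /= => Ee.
    have Ex : x = x' + phim1 e by rewrite -Ee subrKC.
    exists 0; split; last exact: B20.
    exists (y' + (gam_r D e - e)), (z' + (tau_r D e - e)); split.
    * by rewrite Ex linearD gamP PD PB -E1 addsub.
    * by rewrite Ex linearD tauP PD PB -E2 addsub.
    * by rewrite (linearD (tau_r D)) DrD re4p E3 ZeroR addr0.
- move=> z Mz; split.
  + move=> [w [-> [[[c a] b] E]]].
    move: E; rewrite /d1 /= => -[E1 E2 E3].
    exists c, z; split.
    * split; [exists b | exists a]; apply: subr0_eq; symmetry.
      - exact: E2.
      - exact: E1.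
    * exists a, b; split => //; apply: subr0_eq; symmetry.
      - exact: E1.
      - exact: E2.
    * by rewrite subrr.
  + move=> [x [w [[[z1 Ez1] [y1 Ey1]] [y [z' [Ey Ez ->]]] [a [b [Ma Mb E]]]]]].
    exists (0, 0, z); split => //.
    exists (x, y + a, z' + b); rewrite /d1 /=; congr (_,_,_).
    * by rewrite PD (proj1 (M0E a) Ma) addr0 Ey subrr.
    * by rewrite PD (proj1 (M0E b) Mb) addr0 Ez subrr.
    * by rewrite (linearD (tau_r D)) DrD re4p -E subrKC.
- move=> [[a b] c] Hd; move: (Hd); rewrite /d2 /= => Hd'; split.
  + move=> [w [-> [m [[y1 Ey1] [z1 Ez1]]]]].
    move: Ey1 Ez1; rewrite /= => Ey1 Ez1.
    set t' := tau_r D y1 - y1 + (z1 - Delta_r z1).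
    exists (c + t'), (0, 0, c + t'); split => //.
    * apply/M0E; rewrite /t' PD PD !PB -tauP -DelP -Ey1 -Ez1.
      rewrite (linearB (tau_p D)) DpB re4 ZeroP subr0.
      by rewrite [phim1 c + _]addrC.
    * exists (m, - y1, - z1); rewrite /d1 /=; congr (_,_,_) => /=.
      - by rewrite subr0 PN opprK -Ey1 subrKC.
      - by rewrite subr0 PN opprK -Ez1 subrKC.
      - by rewrite subDr' (linearN (tau_r D)) DrN -negre.
  + move=> [u [v' [Mu -> [[[x y] z] E]]]].
    have E1 : a - 0 = gam_p D x - x - phim1 y := congr1 (fun t => t.1.1) E.
    have E2 : b - 0 = tau_p D x - x - phim1 z := congr1 (fun t => t.1.2) E.
    exists (a, b); split => //.
    exists x; split; [exists (- y) | exists (- z)]; rewrite /= PN.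
    * by rewrite -[a]subr0 E1 subBl'.
    * by rewrite -[b]subr0 E2 subBl'.
- move=> [a b] /= [e Ee].
  exists (a, b, - e), (a, b); split => //.
  + by rewrite /d2 /= Ee PN subrr.
  + by exists 0; split; exists 0; rewrite /= subrr linear0 !subr0 P0.
Qed.
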